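(* Let $T\in\mathcal{KC}(V)$ be such that $T$ and $\overline{T}$ are of type $\omega\in(0,\pi)$. Then for every $\theta\in(\omega,\pi)$ there exists $C_\theta\geq0$ such that $\|Q_{c,s}^{-1}(T)\|\leq C_\theta/|s|^2$ for every $s\in S_\theta^c\setminus\{0\}$.
   Context: $\mathbb{H}$ denotes the quaternions $s=s_0+s_1e_1+s_2e_2+s_3e_3$ with $e_1^2=e_2^2=e_3^2=-1$, $e_1e_2=-e_2e_1=e_3$, $e_2e_3=-e_3e_2=e_1$, $e_3e_1=-e_1e_3=e_2$; $|s|$ is the Euclidean norm, $\overline{e_i}=-e_i$ for $i=1,2,3$, $\mathbb{S}=\{s:s_0=0,|s|=1\}$. For $\omega\in(0,\pi)$, $S_\omega=\{re^{J\phi}: r>0, J\in\mathbb{S}, |\phi|<\omega\}$, $\overline{S_\omega}$ its closure, $S_\omega^c=\mathbb{H}\setminus S_\omega$. $V$ is a two-sided Banach space over $\mathbb{H}$, $\mathcal{I}$ the identity. $\mathcal{KC}(V)$ is the class of closed right-linear operators $T$ with two-sided linear domain such that $T=T_0+e_1T_1+e_2T_2+e_3T_3$ with two-sided linear $T_i$, $\operatorname{dom}(T_i)=\operatorname{dom}(T)$, $\operatorname{dom}(T^2)\subseteq\operatorname{dom}(T_iT_j)$ and $T_iT_j=T_jT_i$ on $\operatorname{dom}(T^2)$. $\overline{T}:=T_0-e_1T_1-e_2T_2-e_3T_3$, $|T|^2:=T_0^2+T_1^2+T_2^2+T_3^2$, $Q_{c,s}(T):=s^2\mathcal{I}-2sT_0+|T|^2$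 with domain $\operatorname{dom}(T^2)$. $\rho_S(T)$ is the set of $s\in\mathbb{H}$ for which $Q_{c,s}(T):\operatorname{dom}(T^2)\to V$ is bijective, $Q_{c,s}^{-1}(T)$ the inverse, $\sigma_S(T)=\mathbb{H}\setminus\rho_S(T)$. $S_L^{-1}(s,T):=(s\mathcal{I}-\overline{T})Q_{c,s}^{-1}(T)$ and $S_R^{-1}(s,T):=sQ_{c,s}^{-1}(T)-\sum_{i=0}^3T_iQ_{c,s}^{-1}(T)\overline{e_i}$ ($e_0=1$). $T\in\mathcal{KC}(V)$ is of type $\omega$ if $\sigma_S(T)\subseteq\overline{S_\omega}$ and for every $\theta\in(\omega,\pi)$ there is $C_\theta\geq0$ with $\|S_L^{-1}(s,T)\|\leq C_\theta/|s|$ and $\|S_R^{-1}(s,T)\|\leq C_\theta/|s|$ for all $s\in S_\theta^c\setminus\{0\}$. *)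

(* Defs.v *)
From HB Require Import structures.
From mathcomp Require Import all_boot all_order all_algebra.
From mathcomp Require Import all_classical all_reals all_analysis.
Set Implicit Arguments. Unset Strict Implicit. Unset Printing Implicit Defensive.
Import Order.TTheory GRing.Theory Num.Theory.
Import numFieldNormedType.Exports.
Local Open Scope classical_set_scope.
Local Open Scope ring_scope.

Record quat (R : Type) := Quat { q0 : R; q1 : R; q2 : R; q3 : R }.

Section Quat.
Variable R : realType.
Definition qreal (r : R) : quat R := Quat r 0 0 0.
Definition qe1 : quat R := Quat 0 1 0 0.
Definition qe2 : quat R := Quat 0 0 1 0.
Definition qe3 : quat R := Quat 0 0 0 1.
Definition qadd (a b : quat R) : quat R :=
  Quat (q0 a + q0 b) (q1 a + q1 b) (q2 a + q2 b) (q3 a + q3 b).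
Definition qopp (a : quat R) : quat R := Quat (- q0 a) (- q1 a) (- q2 a) (- q3 a).
Definition qsub (a b : quat R) : quat R := qadd a (qopp b).
Definition qscale (r : R) (a : quat R) : quat R :=
  Quat (r * q0 a) (r * q1 a) (r * q2 a) (r * q3 a).
(* Hamilton product: e1 e2 = e3, e2 e3 = e1, e3 e1 = e2, ei^2 = -1 *)
Definition qmul (a b : quat R) : quat R :=
  Quat (q0 a * q0 b - q1 a * q1 b - q2 a * q2 b - q3 a * q3 b)
       (q0 a * q1 b + q1 a * q0 b + q2 a * q3 b - q3 a * q2 b)
       (q0 a * q2 b - q1 a * q3 b + q2 a * q0 b + q3 a * q1 b)
       (q0 a * q3 b + q1 a * q2 b - q2 a * q1 b + q3 a * q0 b).
Definition qconj (a : quat R) : quat R := Quat (q0 a) (- q1 a) (- q2 a) (- q3 a).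
Definition qnorm (a : quat R) : R :=
  Num.sqrt (q0 a ^+ 2 + q1 a ^+ 2 + q2 a ^+ 2 + q3 a ^+ 2).
Definition unit_imag (J : quat R) : Prop := q0 J = 0 /\ qnorm J = 1.
Definition sector (w : R) : set (quat R) :=
  [set s | exists r J phi, 0 < r /\ unit_imag J /\ `|phi| < w /\
     s = qscale r (qadd (qreal (cos phi)) (qscale (sin phi) J))].
Definition qclosure (A : set (quat R)) : set (quat R) :=
  [set s | forall e : R, 0 < e -> exists t, A t /\ qnorm (qsub s t) < e].
End Quat.
Arguments qe1 {R}.
Arguments qe2 {R}.
Arguments qe3 {R}.

Section TwoSided.
Variables (R : realType) (V : completeNormedModType R).
Variables (lm : quat R -> V -> V) (rm : V -> quat R -> V).

Record two_sided_banach : Prop := {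
  tsb_ladd : forall a b v, lm (qadd a b) v = lm a v + lm b v;
  tsb_laddv : forall a u v, lm a (u + v) = lm a u + lm a v;
  tsb_lmul : forall a b v, lm (qmul a b) v = lm a (lm b v);
  tsb_radd : forall a b v, rm v (qadd a b) = rm v a + rm v b;
  tsb_raddv : forall a u v, rm (u + v) a = rm u a + rm v a;
  tsb_rmul : forall a b v, rm v (qmul a b) = rm (rm v a) b;
  tsb_lr : forall a b v, rm (lm a v) b = lm a (rm v b);
  tsb_lreal : forall (r : R) v, lm (qreal r) v = r *: v;
  tsb_rreal : forall (r : R) v, rm v (qreal r) = r *: v;
  tsb_lnorm : forall a v, `|lm a v| = qnorm a * `|v|;
  tsb_rnorm : forall a v, `|rm v a| = qnorm a * `|v| }.

(* ---------- Operators in KC(V) ----------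
   An operator T = T0 + e1 T1 + e2 T2 + e3 T3 is given by its common
   domain D and the components T0..T3 (values outside D are irrelevant). *)
Variables (D : set V) (T0 T1 T2 T3 : V -> V).

Definition opT (v : V) : V := T0 v + lm qe1 (T1 v) + lm qe2 (T2 v) + lm qe3 (T3 v).
Definition opTbar (v : V) : V :=
  T0 v - lm qe1 (T1 v) - lm qe2 (T2 v) - lm qe3 (T3 v).
Definition dom2 : set V := [set v | D v /\ D (opT v)].

Definition two_sided_subspace (A : set V) : Prop :=
  [/\ A 0, (forall u v, A u -> A v -> A (u + v)),
      (forall a v, A v -> A (lm a v)) & (forall a v, A v -> A (rm v a))].

Definition two_sided_linear_on (A : set V) (S : V -> V) : Prop :=
  [/\ (forall u v, A u -> A v -> S (u + v) = S u + S v),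
      (forall a v, A v -> S (lm a v) = lm a (S v)) &
      (forall a v, A v -> S (rm v a) = rm (S v) a)].

Definition comp (i : nat) : V -> V :=
  match i with 0 => T0 | 1 => T1 | 2 => T2 | _ => T3 end.

Definition KC : Prop :=
  [/\ two_sided_subspace D,
      (forall i, (i < 4)%N -> two_sided_linear_on D (comp i)),
      closed [set p : V * V | D p.1 /\ p.2 = opT p.1],
      (forall j v, (j < 4)%N -> dom2 v -> D (comp j v)) &
      (forall i j v, (i < 4)%N -> (j < 4)%N -> dom2 v ->
         comp i (comp j v) = comp j (comp i v))].

Definition Qcs (s : quat R) (v : V) : V :=
  lm (qmul s s) v - lm (qscale 2 s) (T0 v)
  + (T0 (T0 v) + T1 (T1 v) + T2 (T2 v) + T3 (T3 v)).

Definition rhoS : set (quat R) :=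
  [set s | (forall w1 w2, dom2 w1 -> dom2 w2 -> Qcs s w1 = Qcs s w2 -> w1 = w2)
        /\ (forall v, exists w, dom2 w /\ Qcs s w = v)].
Definition sigmaS : set (quat R) := ~` rhoS.

(* Q_{c,s}(T)^{-1} (the genuine inverse when s is in rhoS) *)
Definition Qinv (s : quat R) (v : V) : V :=
  xget 0 [set w | dom2 w /\ Qcs s w = v].

Definition SLinv (s : quat R) (v : V) : V := lm s (Qinv s v) - opTbar (Qinv s v).
(* S_R^{-1}(s,T) = s Q^{-1} - sum_i T_i Q^{-1} conj(e_i)
   (an operator times a scalar a on the right is  v |-> A (a v)) *)
Definition SRinv (s : quat R) (v : V) : V :=
  lm s (Qinv s v) -
  (T0 (Qinv s v) + T1 (Qinv s (lm (qconj qe1) v))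
   + T2 (Qinv s (lm (qconj qe2) v)) + T3 (Qinv s (lm (qconj qe3) v))).

Definition type_omega (w : R) : Prop :=
  [/\ KC,
      sigmaS `<=` qclosure (sector w) &
      forall th : R, w < th < pi -> exists C : R, 0 <= C /\
        forall s, ~ sector th s -> s <> qreal 0 -> forall v,
          `|SLinv s v| <= C / qnorm s * `|v| /\
          `|SRinv s v| <= C / qnorm s * `|v|].
End TwoSided.

(* Main.v *)
Require Import Defs.
From mathcomp Require Import all_boot all_order all_algebra.
From mathcomp Require Import all_classical all_reals all_analysis.
From mathcomp Require Import ring lra.
Import Order.TTheory GRing.Theory Num.Theory.
Import numFieldNormedType.Exports.
Local Open Scope classical_set_scope.
Local Open Scope ring_scope.
Set Implicit Arguments. Unset Strict Implicit.

Section QuatLemmas.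
Variable R : realType.
Implicit Types a b c s t : quat R.

Lemma quatP a b : q0 a = q0 b -> q1 a = q1 b -> q2 a = q2 b -> q3 a = q3 b -> a = b.
Proof. by case: a => ????; case: b => ???? /= -> -> -> ->. Qed.

Definition ek (k : nat) : quat R :=
  match k with 0 => qreal 1 | 1 => qe1 | 2 => qe2 | _ => qe3 end.

Definition qn2 a := q0 a ^+ 2 + q1 a ^+ 2 + q2 a ^+ 2 + q3 a ^+ 2.

Lemma qn2_ge0 a : 0 <= qn2 a.
Proof. rewrite /qn2; apply: addr_ge0; [apply: addr_ge0; [apply: addr_ge0|]|]; exact: sqr_ge0. Qed.

Lemma qnormE a : qnorm a = Num.sqrt (qn2 a).
Proof. by []. Qed.

Lemma qnorm_ge0 a : 0 <= qnorm a.
Proof. exact: sqrtr_ge0. Qed.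

Lemma qnorm_sqr a : qnorm a ^+ 2 = qn2 a.
Proof. by rewrite qnormE sqr_sqrtr // qn2_ge0. Qed.

Lemma qnorm_mul a b : qnorm (qmul a b) = qnorm a * qnorm b.
Proof.
rewrite !qnormE -sqrtrM ?qn2_ge0 //; congr Num.sqrt.
case: a => a0 a1 a2 a3; case: b => b0 b1 b2 b3; rewrite /qn2 /=; ring.
Qed.

Lemma qnorm_conj a : qnorm (qconj a) = qnorm a.
Proof. rewrite !qnormE; congr Num.sqrt; rewrite /qn2 /= !sqrrN //. Qed.

Lemma qnorm_scale (r : R) a : qnorm (qscale r a) = `|r| * qnorm a.
Proof.
rewrite !qnormE -sqrtr_sqr -sqrtrM ?sqr_ge0 //; congr Num.sqrt.
rewrite /qn2 /=; ring.
Qed.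

Lemma qnorm_real (r : R) : qnorm (qreal r) = `|r|.
Proof. rewrite qnormE /qn2 /= expr0n /= !addr0 sqrtr_sqr //. Qed.

Lemma qnorm_ek k : qnorm (ek k) = 1.
Proof.
rewrite qnormE /qn2; case: k => [|[|[|k]]] /=; rewrite ?expr0n ?expr1n /=;
rewrite ?addr0 ?add0r sqrtr1 //.
Qed.

Lemma qnorm_eq0 a : qnorm a = 0 -> a = qreal 0.
Proof.
move=> h; have h2 : qn2 a = 0 by rewrite -qnorm_sqr h expr0n.
move: h2; rewrite /qn2.
have := sqr_ge0 (q0 a); have := sqr_ge0 (q1 a); have := sqr_ge0 (q2 a);
have := sqr_ge0 (q3 a).
move=> h3 h2 h1 h0 hs.
have e0 : q0 a ^+ 2 = 0 by lra.
have e1 : q1 a ^+ 2 = 0 by lra.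
have e2 : q2 a ^+ 2 = 0 by lra.
have e3 : q3 a ^+ 2 = 0 by lra.
apply: quatP => /=; apply/eqP; rewrite -sqrf_eq0; apply/eqP => //.
Qed.

Lemma qnorm_gt0 a : a <> qreal 0 -> 0 < qnorm a.
Proof.
move=> h; rewrite lt_neqAle qnorm_ge0 andbT; apply/eqP => e.
by apply: h; apply: qnorm_eq0.
Qed.

Lemma q0_le a : `|q0 a| <= qnorm a.
Proof.
rewrite qnormE -(sqrtr_sqr (q0 a)); apply: ler_wsqrtr.
rewrite /qn2; have := sqr_ge0 (q1 a); have := sqr_ge0 (q2 a); have := sqr_ge0 (q3 a).
lra.
Qed.

Lemma qnorm_triangle a b : qnorm a <= qnorm b + qnorm (qsub a b).
Proof.
have hb := qnorm_ge0 b; have hd := qnorm_ge0 (qsub a b).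
rewrite -(ler_pXn2r (n := 2)) ?nnegrE ?addr_ge0 ?qnorm_ge0 //.
rewrite sqrrD !qnorm_sqr.
set x := qsub a b.
have cs : `|q0 b * q0 x + q1 b * q1 x + q2 b * q2 x + q3 b * q3 x| <= qnorm b * qnorm x.
  rewrite -(ler_pXn2r (n := 2)) ?nnegrE ?mulr_ge0 ?qnorm_ge0 //.
  rewrite real_normK ?num_real // exprMn !qnorm_sqr /qn2.
  rewrite -subr_ge0.
  have -> : (q0 b ^+ 2 + q1 b ^+ 2 + q2 b ^+ 2 + q3 b ^+ 2) *
    (q0 x ^+ 2 + q1 x ^+ 2 + q2 x ^+ 2 + q3 x ^+ 2) -
    (q0 b * q0 x + q1 b * q1 x + q2 b * q2 x + q3 b * q3 x) ^+ 2 =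
    (q0 b * q1 x - q1 b * q0 x)^+2 + (q0 b * q2 x - q2 b * q0 x)^+2 +
    (q0 b * q3 x - q3 b * q0 x)^+2 + (q1 b * q2 x - q2 b * q1 x)^+2 +
    (q1 b * q3 x - q3 b * q1 x)^+2 + (q2 b * q3 x - q3 b * q2 x)^+2 by ring.
  by rewrite !addr_ge0 ?sqr_ge0.
have ea : qn2 a = qn2 b + qn2 x + 2 * (q0 b * q0 x + q1 b * q1 x + q2 b * q2 x + q3 b * q3 x).
  rewrite /x /qn2 /qsub /qadd /qopp /=; ring.
rewrite ea.
move: cs; set y := (_ + _ + _ + _ * _) => cs.
have : y <= qnorm b * qnorm x by apply: le_trans (ler_norm y) cs.
rewrite mulr2n; lra.
Qed.


Lemma sector_q0 (th : R) t : 0 < th <= pi -> sector th t -> qnorm t * cos th <= q0 t.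
Proof.
move=> /andP[th0 thpi] [r [J [phi [r0 [[J0 J1] [phith ->]]]]]].
have hn : qnorm (qadd (qreal (cos phi)) (qscale (sin phi) J)) = 1.
  rewrite qnormE; have : qn2 J = 1 by rewrite -qnorm_sqr J1 expr1n.
  rewrite /qn2 /= J0 => hJ.
  have -> : (cos phi + sin phi * 0) ^+ 2 + (0 + sin phi * q1 J) ^+ 2 +
    (0 + sin phi * q2 J) ^+ 2 + (0 + sin phi * q3 J) ^+ 2 =
    cos phi ^+ 2 + sin phi ^+ 2 * (0 ^+ 2 + q1 J ^+ 2 + q2 J ^+ 2 + q3 J ^+ 2) by ring.
  by rewrite hJ mulr1 addrC sin2cos2 subrK sqrtr1.
rewrite qnorm_scale hn mulr1 (ger0_norm (ltW r0)) /= J0 mulr0 addr0.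
rewrite ler_pM2l //.
rewrite -(cos_norm phi); apply: ltW; rewrite ltr_cos // in_itv /= ?normr_ge0 ?(ltW th0) ?thpi //=.
exact: ltW (lt_le_trans phith thpi).
Qed.

Lemma qsubC s t : qnorm (qsub t s) = qnorm (qsub s t).
Proof.
have -> : qsub t s = qscale (-1) (qsub s t).
  apply: quatP; rewrite /= ; ring.
by rewrite qnorm_scale normrN normr1 mul1r.
Qed.

Lemma closure_q0 (w : R) s : 0 < w <= pi -> qclosure (sector w) s ->
  qnorm s * cos w <= q0 s.
Proof.
move=> wI hcl; rewrite leNgt; apply/negP => hlt.
set d := qnorm s * cos w - q0 s.
have d0 : 0 < d by rewrite /d subr_gt0.
have [t [st hst]] := hcl (d / 4) (divr_gt0 d0 (ltr0n _ 4)).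
have h1 := sector_q0 wI st.
have h2 : `|q0 (qsub s t)| <= qnorm (qsub s t) := q0_le _.
have h3 := qnorm_triangle s t.
have h4 := qnorm_triangle t s.
rewrite qsubC in h4.
have h5 : `|(qnorm s - qnorm t) * cos w| <= qnorm (qsub s t).
  rewrite normrM; apply: le_trans (_ : `|qnorm s - qnorm t| <= _).
    by rewrite ler_piMr ?normr_ge0 // cos_max.
  rewrite ler_norml; apply/andP; split; lra.
move: h2 h5; rewrite !ler_norml => /andP[h2a h2b] /andP[h5a h5b].
have e0 : q0 (qsub s t) = q0 s - q0 t by rewrite /= .
rewrite e0 in h2a h2b.
move: h5a h5b; rewrite mulrBl => h5a h5b.
rewrite /d in d0 hst.
lra.
Qed.

Lemma sector_build (th : R) s : 0 < th < pi -> s <> qreal 0 ->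
  qnorm s * cos th < q0 s -> sector th s.
Proof.
move=> /andP[th0 thpi] s0 hlt.
have n0 := qnorm_gt0 s0.
set n := qnorm s in n0 hlt.
set x := q0 s / n.
have hx1 : `|x| <= 1.
  by rewrite /x normrM normfV (ger0_norm (ltW n0)) ler_pdivrMr // mul1r q0_le.
have hxI : -1 <= x <= 1 by rewrite -ler_norml.
have hcx : cos th < x by rewrite /x ltr_pdivlMr // mulrC.
set phi := acos x.
have [/andP[p0 ppi] cp] := acos_def hxI.
have sp : sin phi = Num.sqrt (1 - x ^+ 2) by rewrite sin_acos.
have phith : phi < th.
  by rewrite -ltr_cos ?in_itv /= ?p0 ?ppi ?ltW // cp.
set v : quat R := Quat 0 (q1 s) (q2 s) (q3 s).
have hns : n ^+ 2 = q0 s ^+ 2 + qnorm v ^+ 2.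
  by rewrite /n !qnorm_sqr /qn2 /= expr0n /= add0r !addrA.
have hsn : n * sin phi = qnorm v.
  rewrite sp -(ger0_norm (ltW n0)) -sqrtr_sqr -sqrtrM ?sqr_ge0 //.
  have -> : n ^+ 2 * (1 - x ^+ 2) = qnorm v ^+ 2.
    have -> : n ^+ 2 * (1 - x ^+ 2) = n ^+ 2 - q0 s ^+ 2 by rewrite /x; field; exact: lt0r_neq0.
    by rewrite hns; ring.
  by rewrite sqrtr_sqr ger0_norm // qnorm_ge0.
case: (eqVneq (qnorm v) 0) => hv.
- have := qnorm_eq0 hv; rewrite /v => [[e1 e2 e3]].
  exists n, qe1, 0; split => //; split.
    by split => //; rewrite qnormE /qn2 /= expr0n expr1n /= add0r !addr0 sqrtr1.
  split; first by rewrite normr0.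
  rewrite cos0 sin0.
  have hs0 : n = q0 s.
    move: hns; rewrite hv expr0n /= addr0 => /eqP; rewrite eqf_sqr => /orP[/eqP //|/eqP e].
    exfalso; have := cos_geN1 th => hc.
    have : n * (-1) <= n * cos th by rewrite ler_pM2l.
    lra.
  apply: quatP; rewrite /= ?e1 ?e2 ?e3 -?hs0; ring.
- have m0 : 0 < qnorm v by rewrite lt_neqAle eq_sym hv qnorm_ge0.
  exists n, (qscale (qnorm v)^-1 v), phi; split => //; split.
    split; first by rewrite /= mulr0.
    by rewrite qnorm_scale ger0_norm ?invr_ge0 ?ltW // mulVf // lt0r_neq0.
  split; first by rewrite ger0_norm.
  rewrite cp.
  apply: quatP; rewrite /= /x.
  + by field; rewrite hv lt0r_neq0.
  all: have e : n * (sin phi * (qnorm v)^-1) = 1 by rewrite mulrA hsn mulfV.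
  all: by rewrite -[X in X = _]mul1r -[X in X * _ = _]e; ring.
Qed.

Lemma closure_sector (w th : R) s : 0 < w -> w < th -> th < pi ->
  qclosure (sector w) s -> s <> qreal 0 -> sector th s.
Proof.
move=> w0 wth thpi hcl s0.
have h := closure_q0 (w := w) (s := s).
have hwI : 0 < w <= pi by rewrite w0 /= ltW // (lt_trans wth).
have := h hwI hcl => hq.
apply: sector_build => //; first by rewrite (lt_trans w0 wth).
have n0 := qnorm_gt0 s0.
apply: lt_le_trans hq; rewrite ltr_pM2l //.
by rewrite ltr_cos ?in_itv /= ?ltW // ?(lt_trans w0 wth) ?(lt_trans wth thpi).
Qed.


Definition tk (k : nat) s := qmul (qmul (ek k) s) (qconj (ek k)).

Ltac kcase k := case: k => [|[|[|k]]]; apply: quatP; rewrite /= ; ring.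

Lemma tk_ek k s : qmul (tk k s) (ek k) = qmul (ek k) s.
Proof. case: s => ????; kcase k. Qed.

Lemma tk_ek2 k s : qmul (qmul (tk k s) (tk k s)) (ek k) = qmul (ek k) (qmul s s).
Proof. case: s => ????; kcase k. Qed.

Lemma tk_ek2s k s : qmul (qscale 2 (tk k s)) (ek k) = qmul (ek k) (qscale 2 s).
Proof. case: s => ????; kcase k. Qed.

Lemma ek_conj_mul k : qmul (qconj (ek k)) (ek k) = qreal 1.
Proof. kcase k. Qed.

Lemma tk_inv k s : qmul (qmul (qconj (ek k)) (tk k s)) (ek k) = s.
Proof. case: s => ????; kcase k. Qed.

Lemma conj_polar k (r c sn : R) J :
  qmul (qmul (qconj (ek k)) (qscale r (qadd (qreal c) (qscale sn J)))) (ek k) =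
  qscale r (qadd (qreal c) (qscale sn (qmul (qmul (qconj (ek k)) J) (ek k)))).
Proof. case: J => ????; kcase k. Qed.

Lemma conj_q0 k J : q0 (qmul (qmul (qconj (ek k)) J) (ek k)) = q0 J.
Proof. case: J => ????; case: k => [|[|[|k]]]; rewrite /=; ring. Qed.

Lemma qnorm_conjk k J : qnorm (qmul (qmul (qconj (ek k)) J) (ek k)) = qnorm J.
Proof. by rewrite !qnorm_mul qnorm_conj qnorm_ek mul1r mulr1. Qed.

Lemma qnorm_tk k s : qnorm (tk k s) = qnorm s.
Proof. by rewrite !qnorm_mul qnorm_conj qnorm_ek mul1r mulr1. Qed.

Lemma sector_tk (th : R) k s : sector th (tk k s) -> sector th s.
Proof.
move=> [r [J [phi [r0 [[J0 J1] [phith e]]]]]].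
exists r, (qmul (qmul (qconj (ek k)) J) (ek k)), phi; split => //; split.
  by split; [rewrite conj_q0 | rewrite qnorm_conjk].
split => //; by rewrite -conj_polar -e tk_inv.
Qed.

Lemma tk_neq0 k s : s <> qreal 0 -> tk k s <> qreal 0.
Proof.
move=> h e; have := qnorm_gt0 h; rewrite -(qnorm_tk k) e qnorm_real normr0 ltxx //.
Qed.

End QuatLemmas.
Arguments ek {R} k.

Lemma zsub2 (M : zmodType) (a x a' x' : M) : (a - x) + (a' - x') = (a + a') - (x + x').
Proof. by rewrite addrACA opprD. Qed.

Lemma zsub4 (M : zmodType) (b c d e b' c' d' e' : M) :
  (((b - c) - d) - e) + (((b' - c') - d') - e') = (((b+b') - (c+c')) - (d+d')) - (e+e').
Proof. by rewrite !zsub2. Qed.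

Lemma zadd4 (M : zmodType) (a0 a1 a2 a3 b0 b1 b2 b3 : M) :
  (a0 + a1 + a2 + a3) + (b0 + b1 + b2 + b3) = (a0 + b0) + (a1 + b1) + (a2 + b2) + (a3 + b3).
Proof. by rewrite addrACA; congr (_ + _); rewrite addrACA; congr (_ + _); rewrite addrACA. Qed.

Lemma zadd3 (M : zmodType) (a1 a2 a3 b1 b2 b3 : M) :
  (a1 + a2 + a3) + (b1 + b2 + b3) = (a1 + b1) + (a2 + b2) + (a3 + b3).
Proof. by rewrite addrACA; congr (_ + _); rewrite addrACA. Qed.
Lemma zP (M : zmodType) (A1 A2 A3 b1 b2 b3 : M) :
  - (A1 + A2 + A3) + (A1 + b1) + (A2 + b2) + (A3 + b3) = b1 + b2 + b3.
Proof.
rewrite -addrA -addrA [X in _ + X]addrA -zadd3 addKr //.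
Qed.
Lemma zB (M : zmodType) (B1 B2 B3 : M) : (B2 - B3) + (B3 - B1) + (B1 - B2) = 0.
Proof. by rewrite (addrA (B2 - B3)) subrK (addrA (B2 - B1)) subrK subrr. Qed.
Lemma zid (M : zmodType) (X00 X11 X22 X33 A1 A2 A3 B1 B2 B3 : M) :
  X00 - A1 - A2 - A3 + (A1 - - X11 - B3 - - B2) + (A2 - - B3 - - X22 - B1) +
  (A3 - B2 - - B1 - - X33) = X00 + X11 + X22 + X33.
Proof.
rewrite !opprK.
have g0 : X00 - A1 - A2 - A3 = X00 + - (A1 + A2 + A3) by rewrite !opprD !addrA.
have g1 : A1 + X11 - B3 + B2 = X11 + (A1 + (B2 - B3)).
  by rewrite addrCA -!addrA; congr (_ + (_ + _)); rewrite addrC.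
have g2 : A2 + B3 + X22 - B1 = X22 + (A2 + (B3 - B1)).
  by rewrite -addrA addrCA -!addrA.
have g3 : A3 - B2 + B1 + X33 = X33 + (A3 + (B1 - B2)).
  by rewrite addrC -!addrA; congr (_ + (_ + _)); rewrite addrC.
rewrite g0 g1 g2 g3 -zadd4 -[RHS]addr0; congr (_ + _).
by rewrite zP zB.
Qed.

Section Module.
Variables (R : realType) (V : completeNormedModType R).
Variables (lm : quat R -> V -> V) (rm : V -> quat R -> V).
Hypothesis HB : two_sided_banach lm rm.
Implicit Types (a b c s t : quat R) (u v x y : V).

Lemma lmD a u v : lm a (u + v) = lm a u + lm a v.
Proof. exact: tsb_laddv HB _ _ _. Qed.
Lemma lmDq a b v : lm (qadd a b) v = lm a v + lm b v.
Proof. exact: tsb_ladd HB _ _ _. Qed.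
Lemma lmM a b v : lm (qmul a b) v = lm a (lm b v).
Proof. exact: tsb_lmul HB _ _ _. Qed.
Lemma lmR (r : R) v : lm (qreal r) v = r *: v.
Proof. exact: tsb_lreal HB _ _. Qed.
Lemma lm_norm a v : `|lm a v| = qnorm a * `|v|.
Proof. exact: tsb_lnorm HB _ _. Qed.
Lemma lm0 a : lm a 0 = 0.
Proof. by apply: (addrI (lm a 0)); rewrite -lmD !addr0. Qed.
Lemma lmN a v : lm a (- v) = - lm a v.
Proof. by apply/eqP; rewrite -addr_eq0 -lmD addNr lm0. Qed.
Lemma lmB a u v : lm a (u - v) = lm a u - lm a v.
Proof. by rewrite lmD lmN. Qed.
Lemma lm1 v : lm (qreal 1) v = v.
Proof. by rewrite lmR scale1r. Qed.
Lemma lmq0 v : lm (qreal 0) v = 0.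
Proof. by rewrite lmR scale0r. Qed.
Lemma lm_scale (r : R) a v : lm (qscale r a) v = r *: lm a v.
Proof.
have -> : qscale r a = qmul (qreal r) a by apply: quatP; rewrite /=; ring.
by rewrite lmM lmR.
Qed.
Lemma lmZ a (r : R) v : lm a (r *: v) = r *: lm a v.
Proof.
rewrite -lmR -lmM -lm_scale; congr lm; apply: quatP; rewrite /=; ring.
Qed.
Lemma lmBq a b v : lm (qsub a b) v = lm a v - lm b v.
Proof.
rewrite /qsub lmDq; congr (_ + _).
have -> : qopp b = qscale (-1) b by apply: quatP; rewrite /=; ring.
by rewrite lm_scale scaleN1r.
Qed.

Definition Fc (w u0 u1 u2 u3 : V) (al be g1 g2 g3 : quat R) :=
  lm al w - (lm be u0 - lm g1 u1 - lm g2 u2 - lm g3 u3).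

Lemma Fc_lm w u0 u1 u2 u3 c al be g1 g2 g3 :
  lm c (Fc w u0 u1 u2 u3 al be g1 g2 g3) =
  Fc w u0 u1 u2 u3 (qmul c al) (qmul c be) (qmul c g1) (qmul c g2) (qmul c g3).
Proof. by rewrite /Fc !lmB !lmM. Qed.

Lemma Fc_add w u0 u1 u2 u3 al be g1 g2 g3 al' be' g1' g2' g3' :
  Fc w u0 u1 u2 u3 al be g1 g2 g3 + Fc w u0 u1 u2 u3 al' be' g1' g2' g3' =
  Fc w u0 u1 u2 u3 (qadd al al') (qadd be be') (qadd g1 g1') (qadd g2 g2') (qadd g3 g3').
Proof. by rewrite /Fc !lmDq zsub2 zsub4. Qed.


Section Ops.
Variables (D : set V) (T0 T1 T2 T3 : V -> V).
Hypothesis KCH : KC lm rm D T0 T1 T2 T3.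

Local Notation d2 := (dom2 lm D T0 T1 T2 T3).
Local Notation Q := (Qcs lm T0 T1 T2 T3).
Local Notation Qi := (Qinv lm D T0 T1 T2 T3).
Local Notation SL := (SLinv lm D T0 T1 T2 T3).
Local Notation oT := (opT lm T0 T1 T2 T3).
Local Notation oTb := (opTbar lm T0 T1 T2 T3).
Local Notation rho := (rhoS lm D T0 T1 T2 T3).

Lemma D0 : D 0. Proof. by case: KCH => [[h _ _ _] _ _ _ _]. Qed.
Lemma DD u v : D u -> D v -> D (u + v). Proof. by case: KCH => [[_ h _ _] _ _ _ _]; apply: h. Qed.
Lemma Dlm a v : D v -> D (lm a v). Proof. by case: KCH => [[_ _ h _] _ _ _ _]; apply: h. Qed.
Lemma DN v : D v -> D (- v).
Proof. by move=> h; rewrite -scaleN1r -lmR; exact: Dlm. Qed.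
Lemma DB u v : D u -> D v -> D (u - v).
Proof. by move=> hu hv; apply: DD => //; exact: DN. Qed.

Definition lin (f : V -> V) := two_sided_linear_on lm rm D f.

Lemma linT0 : lin T0. Proof. by case: KCH => _ h _ _ _; exact: (h 0%N isT). Qed.
Lemma linT1 : lin T1. Proof. by case: KCH => _ h _ _ _; exact: (h 1%N isT). Qed.
Lemma linT2 : lin T2. Proof. by case: KCH => _ h _ _ _; exact: (h 2%N isT). Qed.
Lemma linT3 : lin T3. Proof. by case: KCH => _ h _ _ _; exact: (h 3%N isT). Qed.

Lemma fD f : lin f -> forall u v, D u -> D v -> f (u + v) = f u + f v.
Proof. by case. Qed.
Lemma flm f : lin f -> forall a v, D v -> f (lm a v) = lm a (f v).
Proof. by case. Qed.
Lemma fN f : lin f -> forall v, D v -> f (- v) = - f v.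
Proof.
move=> hf v hv; rewrite -scaleN1r -lmR (flm hf) //; by rewrite lmR scaleN1r.
Qed.
Lemma fB f : lin f -> forall u v, D u -> D v -> f (u - v) = f u - f v.
Proof. by move=> hf u v hu hv; rewrite (fD hf) ?(fN hf) //; exact: DN. Qed.

Lemma K4 v : d2 v -> [/\ D (T0 v), D (T1 v), D (T2 v) & D (T3 v)].
Proof.
case: KCH => _ _ _ h _ hv.
by split; [exact: (h 0%N _ isT) | exact: (h 1%N _ isT) | exact: (h 2%N _ isT) | exact: (h 3%N _ isT)].
Qed.

Lemma K5 i j v : (i < 4)%N -> (j < 4)%N -> d2 v ->
  Defs.comp T0 T1 T2 T3 i (Defs.comp T0 T1 T2 T3 j v) = Defs.comp T0 T1 T2 T3 j (Defs.comp T0 T1 T2 T3 i v).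
Proof. by case: KCH => _ _ _ _ h; exact: h. Qed.

Lemma d2E v : d2 v <-> [/\ D v, D (T0 v), D (T1 v), D (T2 v) & D (T3 v)].
Proof.
split.
  move=> hv; have [? ? ? ?] := K4 hv; split => //; by case: hv.
move=> [h h0 h1 h2 h3]; split => //.
by rewrite /opT; repeat apply: DD => //; apply: Dlm.
Qed.

Lemma d2D u v : d2 u -> d2 v -> d2 (u + v).
Proof.
move=> /d2E [hu h0 h1 h2 h3] /d2E [hv g0 g1 g2 g3]; apply/d2E; split.
- exact: DD.
- by rewrite (fD linT0) //; apply: DD.
- by rewrite (fD linT1) //; apply: DD.
- by rewrite (fD linT2) //; apply: DD.
- by rewrite (fD linT3) //; apply: DD.
Qed.

Lemma d2lm a v : d2 v -> d2 (lm a v).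
Proof.
move=> /d2E [hv h0 h1 h2 h3]; apply/d2E; split.
- exact: Dlm.
- by rewrite (flm linT0) //; apply: Dlm.
- by rewrite (flm linT1) //; apply: Dlm.
- by rewrite (flm linT2) //; apply: Dlm.
- by rewrite (flm linT3) //; apply: Dlm.
Qed.

Lemma d2Z (r : R) v : d2 v -> d2 (r *: v).
Proof. by move=> h; rewrite -lmR; apply: d2lm. Qed.
Lemma d2N v : d2 v -> d2 (- v).
Proof. by move=> h; rewrite -scaleN1r; apply: d2Z. Qed.
Lemma d2B u v : d2 u -> d2 v -> d2 (u - v).
Proof. by move=> hu hv; apply: d2D => //; apply: d2N. Qed.
Lemma d2D_ u : d2 u -> D u.
Proof. by case. Qed.

Lemma Q_lm s t e z : qmul (qmul t t) e = qmul e (qmul s s) ->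
  qmul (qscale 2 t) e = qmul e (qscale 2 s) -> d2 z ->
  Q t (lm e z) = lm e (Q s z).
Proof.
move=> h1 h2 /d2E [hz h0 h1' h2' h3].
rewrite /Qcs (flm linT0) // (flm linT0) // (flm linT1) // (flm linT1) //.
rewrite (flm linT2) // (flm linT2) // (flm linT3) // (flm linT3) //.
rewrite -!lmM h1 h2 !lmM.
by rewrite lmD lmB !lmD.
Qed.

Lemma Q_D s u v : d2 u -> d2 v -> Q s (u + v) = Q s u + Q s v.
Proof.
move=> /d2E [hu h0 h1 h2 h3] /d2E [hv g0 g1 g2 g3].
rewrite /Qcs lmD.
rewrite (fD linT0) // (fD linT0) // (fD linT1) // (fD linT1) //.
rewrite (fD linT2) // (fD linT2) // (fD linT3) // (fD linT3) //.
rewrite lmD.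
set a := lm _ u; set a' := lm _ v.
set b := lm _ (T0 u); set b' := lm _ (T0 v).
by rewrite -zsub2 [RHS]addrACA zadd4.
Qed.


Ltac dsolve := repeat (first [ assumption | apply: DB | apply: DD | apply: Dlm ]).

Lemma Q_N s v : d2 v -> Q s (- v) = - Q s v.
Proof.
move=> hv; rewrite -scaleN1r -lmR (Q_lm (s := s)) ?lmR ?scaleN1r //;
  apply: quatP; rewrite /=; ring.
Qed.

Lemma Q_B s u v : d2 u -> d2 v -> Q s (u - v) = Q s u - Q s v.
Proof. by move=> hu hv; rewrite Q_D ?Q_N //; apply: d2N. Qed.

Lemma Q_s s v : d2 v -> Q s (lm s v) = lm s (Q s v).
Proof. by move=> hv; rewrite (Q_lm (s := s)) //; apply: quatP; rewrite /=; ring. Qed.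

Lemma e11 x : lm qe1 (lm qe1 x) = - x.
Proof. by rewrite -lmM (_ : qmul _ _ = qreal (-1)) ?lmR ?scaleN1r //; apply: quatP; rewrite /=; ring. Qed.
Lemma e22 x : lm qe2 (lm qe2 x) = - x.
Proof. by rewrite -lmM (_ : qmul _ _ = qreal (-1)) ?lmR ?scaleN1r //; apply: quatP; rewrite /=; ring. Qed.
Lemma e33 x : lm qe3 (lm qe3 x) = - x.
Proof. by rewrite -lmM (_ : qmul _ _ = qreal (-1)) ?lmR ?scaleN1r //; apply: quatP; rewrite /=; ring. Qed.
Lemma e12 x : lm qe1 (lm qe2 x) = lm qe3 x.
Proof. by rewrite -lmM (_ : qmul _ _ = qe3) //; apply: quatP; rewrite /=; ring. Qed.
Lemma e23 x : lm qe2 (lm qe3 x) = lm qe1 x.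
Proof. by rewrite -lmM (_ : qmul _ _ = qe1) //; apply: quatP; rewrite /=; ring. Qed.
Lemma e31 x : lm qe3 (lm qe1 x) = lm qe2 x.
Proof. by rewrite -lmM (_ : qmul _ _ = qe2) //; apply: quatP; rewrite /=; ring. Qed.
Lemma e21 x : lm qe2 (lm qe1 x) = - lm qe3 x.
Proof. by rewrite -lmM (_ : qmul _ _ = qscale (-1) qe3) ?lm_scale ?scaleN1r //; apply: quatP; rewrite /=; ring. Qed.
Lemma e32 x : lm qe3 (lm qe2 x) = - lm qe1 x.
Proof. by rewrite -lmM (_ : qmul _ _ = qscale (-1) qe1) ?lm_scale ?scaleN1r //; apply: quatP; rewrite /=; ring. Qed.
Lemma e13 x : lm qe1 (lm qe3 x) = - lm qe2 x.
Proof. by rewrite -lmM (_ : qmul _ _ = qscale (-1) qe2) ?lm_scale ?scaleN1r //; apply: quatP; rewrite /=; ring. Qed.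

Lemma oToTb w : d2 w -> oT (oTb w) = T0 (T0 w) + T1 (T1 w) + T2 (T2 w) + T3 (T3 w).
Proof.
move=> hw; have [h0 h1 h2 h3] := K4 hw; have hwD := d2D_ hw.
have c10 : T1 (T0 w) = T0 (T1 w) := K5 (i:=1) (j:=0) isT isT hw.
have c20 : T2 (T0 w) = T0 (T2 w) := K5 (i:=2) (j:=0) isT isT hw.
have c30 : T3 (T0 w) = T0 (T3 w) := K5 (i:=3) (j:=0) isT isT hw.
have c21 : T2 (T1 w) = T1 (T2 w) := K5 (i:=2) (j:=1) isT isT hw.
have c31 : T3 (T1 w) = T1 (T3 w) := K5 (i:=3) (j:=1) isT isT hw.
have c32 : T3 (T2 w) = T2 (T3 w) := K5 (i:=3) (j:=2) isT isT hw.
rewrite /opT /opTbar.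
rewrite (fB linT0); dsolve. rewrite (fB linT0); dsolve. rewrite (fB linT0); dsolve.
rewrite (fB linT1); dsolve. rewrite (fB linT1); dsolve. rewrite (fB linT1); dsolve.
rewrite (fB linT2); dsolve. rewrite (fB linT2); dsolve. rewrite (fB linT2); dsolve.
rewrite (fB linT3); dsolve. rewrite (fB linT3); dsolve. rewrite (fB linT3); dsolve.
rewrite !(flm linT0) // !(flm linT1) // !(flm linT2) // !(flm linT3) //.
rewrite c10 c20 c30 c21 c31 c32.
rewrite !lmB e11 e22 e33 e12 e23 e31 e21 e32 e13.
exact: zid.
Qed.


Lemma Qi_spec s v : rho s -> d2 (Qi s v) /\ Q s (Qi s v) = v.
Proof. move=> [_ hs]; rewrite /Qinv; case: (hs v) => w hw; exact: (@xgetI _ 0 [set w0 | d2 w0 /\ Q s w0 = v] w hw). Qed.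

Lemma Qi_uniq s v p : rho s -> d2 p -> Q s p = v -> Qi s v = p.
Proof.
move=> hr hp hq; have [h1 h2] := Qi_spec v hr.
by case: hr => inj _; apply: inj => //; rewrite h2 hq.
Qed.

Lemma Qi_tk k s v : rho s -> rho (tk k s) -> Qi (tk k s) (lm (ek k) v) = lm (ek k) (Qi s v).
Proof.
move=> hs ht; have [h1 h2] := Qi_spec v hs.
apply: Qi_uniq => //; first exact: d2lm.
by rewrite (Q_lm (s := s)) ?h2 // ?tk_ek2 ?tk_ek2s.
Qed.

Lemma SL_tk k s v : rho s -> rho (tk k s) ->
  SL (tk k s) (lm (ek k) v) =
  Fc (Qi s v) (T0 (Qi s v)) (T1 (Qi s v)) (T2 (Qi s v)) (T3 (Qi s v))
    (qmul (ek k) s) (ek k) (qmul qe1 (ek k)) (qmul qe2 (ek k)) (qmul qe3 (ek k)).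
Proof.
move=> hs ht; rewrite /SLinv Qi_tk //.
have [h1 h2] := Qi_spec v hs; have hD := d2D_ h1.
rewrite /opTbar /Fc (flm linT0) // (flm linT1) // (flm linT2) // (flm linT3) //.
by rewrite -!lmM tk_ek.
Qed.

Lemma oT_B u v : D u -> D v -> oT (u - v) = oT u - oT v.
Proof.
move=> hu hv; rewrite /opT (fB linT0) // (fB linT1) // (fB linT2) // (fB linT3) //.
by rewrite !lmB !zsub2.
Qed.

Lemma SL_d2 t y : rho t -> D y -> d2 (SL t y).
Proof.
move=> ht hy; have [h1 h2] := Qi_spec y ht.
set w := Qi t y in h1 h2 *.
have [g0 g1 g2 g3] := K4 h1; have hw := d2D_ h1.
have hb : D (oTb w) by rewrite /opTbar; dsolve.
split; first by rewrite /SLinv -/w; dsolve.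
rewrite /SLinv -/w oT_B //; last exact: Dlm.
apply: DB; first by case: (d2lm t h1).
rewrite oToTb //.
have -> : T0 (T0 w) + T1 (T1 w) + T2 (T2 w) + T3 (T3 w) =
  Q t w - (lm (qmul t t) w - lm (qscale 2 t) (T0 w)) by rewrite /Qcs [RHS]addrC addKr.
rewrite h2; dsolve.
Qed.

Lemma Fc_X w u0 u1 u2 u3 s :
  Fc w u0 u1 u2 u3 (qscale 4 s) (qreal 4) (qreal 0) (qreal 0) (qreal 0) = 4 *: (lm s w - u0).
Proof. by rewrite /Fc lm_scale lmR !lmq0 !subr0 scalerBr. Qed.
Lemma Fc_Y1 w u0 u1 u2 u3 :
  Fc w u0 u1 u2 u3 (qreal 0) (qreal 0) (qreal 4) (qreal 0) (qreal 0) = 4 *: u1.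
Proof. by rewrite /Fc !lmq0 lmR !subr0 !sub0r opprK. Qed.
Lemma Fc_Y2 w u0 u1 u2 u3 :
  Fc w u0 u1 u2 u3 (qreal 0) (qreal 0) (qreal 0) (qreal 4) (qreal 0) = 4 *: u2.
Proof. by rewrite /Fc !lmq0 lmR !subr0 !sub0r opprK. Qed.
Lemma Fc_Y3 w u0 u1 u2 u3 :
  Fc w u0 u1 u2 u3 (qreal 0) (qreal 0) (qreal 0) (qreal 0) (qreal 4) = 4 *: u3.
Proof. by rewrite /Fc !lmq0 lmR !subr0 !sub0r opprK. Qed.

Definition comb (c : nat -> quat R) s v :=
  lm (c 0%N) (SL (tk 0 s) (lm (ek 0) v)) + lm (c 1%N) (SL (tk 1 s) (lm (ek 1) v)) +
  lm (c 2%N) (SL (tk 2 s) (lm (ek 2) v)) + lm (c 3%N) (SL (tk 3 s) (lm (ek 3) v)).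

Definition allrho s := forall k, rho (tk k s).

Lemma comb_Fc (c : nat -> quat R) s v : rho s -> allrho s -> comb c s v =
  let w := Qi s v in
  Fc w (T0 w) (T1 w) (T2 w) (T3 w)
   (qadd (qadd (qadd (qmul (c 0%N) (qmul (ek 0) s)) (qmul (c 1%N) (qmul (ek 1) s)))
       (qmul (c 2%N) (qmul (ek 2) s))) (qmul (c 3%N) (qmul (ek 3) s)))
   (qadd (qadd (qadd (qmul (c 0%N) (ek 0)) (qmul (c 1%N) (ek 1)))
       (qmul (c 2%N) (ek 2))) (qmul (c 3%N) (ek 3)))
   (qadd (qadd (qadd (qmul (c 0%N) (qmul qe1 (ek 0))) (qmul (c 1%N) (qmul qe1 (ek 1))))
       (qmul (c 2%N) (qmul qe1 (ek 2)))) (qmul (c 3%N) (qmul qe1 (ek 3))))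
   (qadd (qadd (qadd (qmul (c 0%N) (qmul qe2 (ek 0))) (qmul (c 1%N) (qmul qe2 (ek 1))))
       (qmul (c 2%N) (qmul qe2 (ek 2)))) (qmul (c 3%N) (qmul qe2 (ek 3))))
   (qadd (qadd (qadd (qmul (c 0%N) (qmul qe3 (ek 0))) (qmul (c 1%N) (qmul qe3 (ek 1))))
       (qmul (c 2%N) (qmul qe3 (ek 2)))) (qmul (c 3%N) (qmul qe3 (ek 3)))).
Proof.
move=> hs ha; rewrite /comb !SL_tk // !Fc_lm !Fc_add //.
Qed.

Definition Xop s v := lm s (Qi s v) - T0 (Qi s v).

Lemma X_comb s v : rho s -> allrho s -> comb (fun k => qconj (ek k)) s v = 4 *: Xop s v.
Proof.
move=> hs ha; rewrite comb_Fc //= -(Fc_X (Qi s v) (T0 (Qi s v)) (T1 (Qi s v)) (T2 (Qi s v)) (T3 (Qi s v))); congr Fc;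
  case: s {hs ha} => ????; apply: quatP; rewrite /=; ring.
Qed.

Lemma Y1_comb s v : rho s -> allrho s ->
  comb (fun k => qmul (qconj (ek k)) (qconj qe1)) s v = 4 *: T1 (Qi s v).
Proof.
move=> hs ha; rewrite comb_Fc //= -(Fc_Y1 (Qi s v) (T0 (Qi s v)) (T1 (Qi s v)) (T2 (Qi s v)) (T3 (Qi s v))); congr Fc;
  case: s {hs ha} => ????; apply: quatP; rewrite /=; ring.
Qed.
Lemma Y2_comb s v : rho s -> allrho s ->
  comb (fun k => qmul (qconj (ek k)) (qconj qe2)) s v = 4 *: T2 (Qi s v).
Proof.
move=> hs ha; rewrite comb_Fc //= -(Fc_Y2 (Qi s v) (T0 (Qi s v)) (T1 (Qi s v)) (T2 (Qi s v)) (T3 (Qi s v))); congr Fc;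
  case: s {hs ha} => ????; apply: quatP; rewrite /=; ring.
Qed.
Lemma Y3_comb s v : rho s -> allrho s ->
  comb (fun k => qmul (qconj (ek k)) (qconj qe3)) s v = 4 *: T3 (Qi s v).
Proof.
move=> hs ha; rewrite comb_Fc //= -(Fc_Y3 (Qi s v) (T0 (Qi s v)) (T1 (Qi s v)) (T2 (Qi s v)) (T3 (Qi s v))); congr Fc;
  case: s {hs ha} => ????; apply: quatP; rewrite /=; ring.
Qed.


Lemma linTc i : (i < 4)%N -> lin (Defs.comp T0 T1 T2 T3 i).
Proof. by case: KCH => _ h _ _ _; exact: h. Qed.

Lemma Q_Tc i s z : (i < 4)%N -> d2 z -> d2 (T0 z) -> d2 (T1 z) -> d2 (T2 z) -> d2 (T3 z) ->
  Q s (Defs.comp T0 T1 T2 T3 i z) = Defs.comp T0 T1 T2 T3 i (Q s z).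
Proof.
move=> hi hz h0 h1 h2 h3.
have hl := linTc hi; set f := Defs.comp T0 T1 T2 T3 i in hl *.
have [g0 g1 g2 g3] := K4 hz; have hzD := d2D_ hz.
have [k00 _ _ _] := K4 h0; have [_ k11 _ _] := K4 h1.
have [_ _ k22 _] := K4 h2; have [_ _ _ k33] := K4 h3.
have e0 : f (T0 z) = T0 (f z) := K5 hi (isT : (0 < 4)%N) hz.
have e00 : f (T0 (T0 z)) = T0 (f (T0 z)) := K5 hi (isT : (0 < 4)%N) h0.
have e11 : f (T1 (T1 z)) = T1 (f (T1 z)) := K5 hi (isT : (1 < 4)%N) h1.
have e1 : f (T1 z) = T1 (f z) := K5 hi (isT : (1 < 4)%N) hz.
have e22 : f (T2 (T2 z)) = T2 (f (T2 z)) := K5 hi (isT : (2 < 4)%N) h2.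
have e2 : f (T2 z) = T2 (f z) := K5 hi (isT : (2 < 4)%N) hz.
have e33 : f (T3 (T3 z)) = T3 (f (T3 z)) := K5 hi (isT : (3 < 4)%N) h3.
have e3 : f (T3 z) = T3 (f z) := K5 hi (isT : (3 < 4)%N) hz.
rewrite /Qcs (fD hl); dsolve. rewrite (fB hl); dsolve.
rewrite (fD hl); dsolve. rewrite (fD hl); dsolve. rewrite (fD hl); dsolve.
rewrite !(flm hl) //.
by rewrite e0 e00 e11 e22 e33 e0 e1 e2 e3.
Qed.

Lemma comb_d2 (c : nat -> quat R) s v : allrho s -> D v -> d2 (comb c s v).
Proof.
move=> ha hv; rewrite /comb.
by repeat apply: d2D; apply: d2lm; apply: SL_d2 => //; apply: Dlm.
Qed.

Lemma reg s v : rho s -> allrho s -> D v ->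
  [/\ d2 (T0 (Qi s v)), d2 (T1 (Qi s v)), d2 (T2 (Qi s v)) & d2 (T3 (Qi s v))].
Proof.
move=> hs ha hv; have [h1 _] := Qi_spec v hs.
have h4 : (4 : R) != 0 by rewrite pnatr_eq0.
have inv4 : forall x : V, x = 4^-1 *: (4 *: x) by move=> x; rewrite scalerA mulVf // scale1r.
split.
- have hX : d2 (Xop s v).
    by rewrite (inv4 (Xop s v)) -X_comb //; apply: d2Z; apply: comb_d2.
  have -> : T0 (Qi s v) = lm s (Qi s v) - Xop s v by rewrite /Xop opprB addrC subrK.
  by apply: d2B => //; apply: d2lm.
- by rewrite (inv4 (T1 (Qi s v))) -Y1_comb //; apply: d2Z; apply: comb_d2.
- by rewrite (inv4 (T2 (Qi s v))) -Y2_comb //; apply: d2Z; apply: comb_d2.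
- by rewrite (inv4 (T3 (Qi s v))) -Y3_comb //; apply: d2Z; apply: comb_d2.
Qed.

Lemma comb_bound (c : nat -> quat R) s v (K : R) : (forall k, qnorm (c k) = 1) ->
  (forall k u, `|SL (tk k s) u| <= K * `|u|) -> `|comb c s v| <= 4 * (K * `|v|).
Proof.
move=> hc hb; rewrite /comb.
have hk : forall k, `|lm (c k) (SL (tk k s) (lm (ek k) v))| <= K * `|v|.
  move=> k; rewrite lm_norm hc mul1r; apply: le_trans (hb k _) _.
  by rewrite lm_norm qnorm_ek mul1r.
apply: le_trans (ler_normD _ _) _; apply: le_trans (lerD (ler_normD _ _) (lexx _)) _.
apply: le_trans (lerD (lerD (ler_normD _ _) (lexx _)) (lexx _)) _.
have := hk 0%N; have := hk 1%N; have := hk 2%N; have := hk 3%N.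
lra.
Qed.

Lemma zX (M : zmodType) (a c d : M) : a - c - (c - d) = a - (c + c) + d.
Proof. by rewrite opprB addrA opprD addrA addrAC. Qed.


Lemma qnorm_cX k : qnorm (qconj (ek k)) = 1 :> R.
Proof. by rewrite qnorm_conj qnorm_ek. Qed.
Lemma qnorm_cY k j : qnorm (qmul (qconj (ek k)) (qconj (ek j))) = 1 :> R.
Proof. by rewrite qnorm_mul !qnorm_conj !qnorm_ek mulr1. Qed.

Lemma main_bound s (K : R) : rho s -> allrho s -> 0 <= K ->
  (forall k u, `|SL (tk k s) u| <= K * `|u|) ->
  forall v, `|Qi s v| <= 4 * (K * (K * `|v|)).
Proof.
move=> hs ha hK hb v.
have h4 : (0 : R) < 4 by [].
have Xb : forall u, `|Xop s u| <= K * `|u|.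
  move=> u; have := comb_bound (c := fun k => qconj (ek k)) u qnorm_cX hb.
  by rewrite X_comb // normrZ (ger0_norm (ltW h4)) ler_pM2l.
have Yb1 : forall u, `|T1 (Qi s u)| <= K * `|u|.
  move=> u; have := comb_bound (c := fun k => qmul (qconj (ek k)) (qconj (ek 1))) u
    (fun k => qnorm_cY k 1) hb.
  by rewrite Y1_comb // normrZ (ger0_norm (ltW h4)) ler_pM2l.
have Yb2 : forall u, `|T2 (Qi s u)| <= K * `|u|.
  move=> u; have := comb_bound (c := fun k => qmul (qconj (ek k)) (qconj (ek 2))) u
    (fun k => qnorm_cY k 2) hb.
  by rewrite Y2_comb // normrZ (ger0_norm (ltW h4)) ler_pM2l.
have Yb3 : forall u, `|T3 (Qi s u)| <= K * `|u|.
  move=> u; have := comb_bound (c := fun k => qmul (qconj (ek k)) (qconj (ek 3))) u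
    (fun k => qnorm_cY k 3) hb.
  by rewrite Y3_comb // normrZ (ger0_norm (ltW h4)) ler_pM2l.
have [hw1 hw2] := Qi_spec v hs.
set w := Qi s v in hw1 hw2 Yb1 Yb2 Yb3 *.
have [hp1 hp2] := Qi_spec w hs.
set p := Qi s w in hp1 hp2 *.
have [r0 r1 r2 r3] := reg hs ha (d2D_ hw1).
rewrite -/p in r0 r1 r2 r3.
have hpD := d2D_ hp1.
have [g0 _ _ _] := K4 hp1.
have Qa : Qi s (Xop s v) = lm s p - T0 p.
  apply: Qi_uniq => //; first by apply: d2B => //; apply: d2lm.
  rewrite Q_B ?Q_s //; last by apply: d2lm.
  have := Q_Tc (i := 0) s isT hp1 r0 r1 r2 r3; rewrite /= => ->.
  by rewrite hp2.
have Qb1 : Qi s (T1 w) = T1 p.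
  apply: Qi_uniq => //.
  have := Q_Tc (i := 1) s isT hp1 r0 r1 r2 r3; rewrite /= => ->.
  by rewrite hp2.
have Qb2 : Qi s (T2 w) = T2 p.
  apply: Qi_uniq => //.
  have := Q_Tc (i := 2) s isT hp1 r0 r1 r2 r3; rewrite /= => ->.
  by rewrite hp2.
have Qb3 : Qi s (T3 w) = T3 p.
  apply: Qi_uniq => //.
  have := Q_Tc (i := 3) s isT hp1 r0 r1 r2 r3; rewrite /= => ->.
  by rewrite hp2.
have ident : w = Xop s (Xop s v) + T1 (Qi s (T1 w)) + T2 (Qi s (T2 w)) + T3 (Qi s (T3 w)).
  rewrite [Xop s (Xop s v)]/Xop Qa Qb1 Qb2 Qb3.
  rewrite lmB -lmM (fB linT0) //; last by apply: Dlm.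
  rewrite (flm linT0) // zX.
  rewrite -{1}hp2 /Qcs lm_scale scaler_nat mulr2n.
  by rewrite !addrA.
rewrite ident.
apply: le_trans (ler_normD _ _) _; apply: le_trans (lerD (ler_normD _ _) (lexx _)) _.
apply: le_trans (lerD (lerD (ler_normD _ _) (lexx _)) (lexx _)) _.
have a0 : `|Xop s (Xop s v)| <= K * (K * `|v|).
  by apply: le_trans (Xb _) _; apply: ler_wpM2l.
have a1 : `|T1 (Qi s (T1 w))| <= K * (K * `|v|).
  by apply: le_trans (Yb1 _) _; apply: ler_wpM2l => //; exact: Yb1.
have a2 : `|T2 (Qi s (T2 w))| <= K * (K * `|v|).
  by apply: le_trans (Yb2 _) _; apply: ler_wpM2l => //; exact: Yb2.
have a3 : `|T3 (Qi s (T3 w))| <= K * (K * `|v|).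
  by apply: le_trans (Yb3 _) _; apply: ler_wpM2l => //; exact: Yb3.
lra.
Qed.

End Ops.
End Module.

Unset Implicit Arguments.

Theorem lemma2p7 (R : realType) (V : completeNormedModType R)
  (lm : quat R -> V -> V) (rm : V -> quat R -> V)
  (D : set V) (T0 T1 T2 T3 : V -> V) (w : R) :
  two_sided_banach lm rm ->
  0 < w < pi ->
  type_omega lm rm D T0 T1 T2 T3 w ->
  type_omega lm rm D T0 (fun v => - T1 v) (fun v => - T2 v) (fun v => - T3 v) w ->
  forall th : R, w < th < pi -> exists C : R, 0 <= C /\
    forall s : quat R, ~ sector th s -> s <> qreal 0 -> forall v : V,
      `|Qinv lm D T0 T1 T2 T3 s v| <= C / qnorm s ^+ 2 * `|v|.
Proof.
move=> HB /andP[w0 wpi] hT _ th /andP[wth thpi].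
case: hT => hKC hsp hbd.
have [C [C0 hC]] := hbd th (introT andP (conj wth thpi)).
exists (4 * C ^+ 2); split; first by apply: mulr_ge0 => //; exact: sqr_ge0.
move=> s hs s0 v.
have n0 := qnorm_gt0 s0.
have rhoP : forall t, ~ sector th t -> t <> qreal 0 -> rhoS lm D T0 T1 T2 T3 t.
  move=> t ht t0; case: (pselect (rhoS lm D T0 T1 T2 T3 t)) => // hn.
  exfalso; apply: ht; apply: (closure_sector w0 wth thpi) => //.
  exact: hsp.
have hrs := rhoP s hs s0.
have hnt : forall k, ~ sector th (tk k s) by move=> k h; apply: hs; exact: sector_tk h.
have ha : allrho lm D T0 T1 T2 T3 s := fun k => rhoP (tk k s) (hnt k) (tk_neq0 (k:=k) s0).
have hb : forall k u, `|SLinv lm D T0 T1 T2 T3 (tk k s) u| <= C / qnorm s * `|u|.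
  move=> k u; have := (hC (tk k s) (hnt k) (tk_neq0 (k:=k) s0) u).1; by rewrite qnorm_tk.
have hK : 0 <= C / qnorm s by apply: divr_ge0 => //; exact: ltW.
have := main_bound HB hKC hrs ha hK hb v.
have -> : 4 * C ^+ 2 / qnorm s ^+ 2 * `|v| = 4 * (C / qnorm s * (C / qnorm s * `|v|)).
  by field; exact: lt0r_neq0.
done.
Qed.
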